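(* The following identities hold: \begin{align*}\sum_{k=1}^\infty\frac{77k^2-53k+10}{k(3k-1)(3k-2)(-2)^k\binom{4k}k}&=-3\log2, \\\sum_{k=1}^\infty\frac{415k^2-343k+62}{k(3k-1)(3k-2)(-8)^k\binom{4k}k}&=-3\log2, \\\sum_{k=1}^\infty\frac{187k^2-131k+22}{k(3k-1)(3k-2)(-24)^k\binom{4k}k}&=\log\frac23, \\\sum_{k=1}^\infty\frac{1261k^2-989k+170}{k(3k-1)(3k-2)(-192)^k\binom{4k}k}&=\log\frac34. \end{align*} *)

(* Defs.v *)
From Stdlib Require Import Reals.
From Coquelicot Require Import Coquelicot.
Open Scope R_scope.

Definition summand (a b c m : R) (k : nat) : R :=
  let x := INR k in
  (a * x ^ 2 + b * x + c) /
  (x * (3 * x - 1) * (3 * x - 2) * m ^ k * Binomial.C (4 * k) k).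

(* Main.v *)
Require Import Defs.
From Stdlib Require Import Reals Lra Lia Arith Factorial.
From Coquelicot Require Import Coquelicot.
Open Scope R_scope.

Lemma cont_poly a b x : continuous (fun t => t^a * (1-t)^b) x.
Proof. apply (@ex_derive_continuous R_AbsRing R_NormedModule). auto_derive. auto. Qed.

Lemma fact_S_INR n : INR (fact (S n)) = (INR n + 1) * INR (fact n).
Proof. rewrite fact_simpl, mult_INR, S_INR. ring. Qed.

Lemma INR_fact_pos n : 0 < INR (fact n).
Proof. apply lt_0_INR, lt_O_fact. Qed.

Lemma beta0 a : is_RInt (fun t => t^a * (1-t)^0) 0 1 (INR (fact a) * INR (fact 0) / INR (fact (a+0+1))).
Proof.
  assert (Ha : 0 <= INR a) by apply pos_INR.
  replace (INR (fact a) * INR (fact 0) / INR (fact (a+0+1))) with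
     (minus ((fun t => t^(S a) / (INR a + 1)) 1) ((fun t => t^(S a) / (INR a + 1)) 0)).
  - apply (is_RInt_derive (V:=R_CompleteNormedModule) (fun t => t^(S a) / (INR a + 1))).
    + intros x _. auto_derive. lra. change (match a with 0%nat => 1 | S _ => INR a + 1 end) with (INR (S a)). rewrite S_INR. simpl. field. lra.
    + intros x _. apply cont_poly.
  - rewrite Nat.add_0_r, Nat.add_1_r, fact_S_INR. simpl fact.
    unfold minus, plus, opp; simpl. rewrite pow1. field. split; [|lra].
    pose proof (INR_fact_pos a). lra.
Qed.

Lemma beta b : forall a, is_RInt (fun t => t^a * (1-t)^b) 0 1 (INR (fact a) * INR (fact b) / INR (fact (a+b+1))).
Proof.
  induction b as [|b IH]; intros a. apply beta0.
  assert (Ha : 0 <= INR a) by apply pos_INR.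
  assert (Hb : 0 <= INR b) by apply pos_INR.
  pose (G := fun t => t^(S a) * (1-t)^(S b)).
  pose (G' := fun t => (INR a + 1) * (t^a * (1-t)^(S b)) - (INR b + 1) * (t^(S a) * (1-t)^b)).
  assert (H1 : is_RInt G' 0 1 (minus (G 1) (G 0))).
  { apply (is_RInt_derive (V:=R_CompleteNormedModule) G G').
    + intros x _. unfold G, G'. auto_derive. auto.
      change (match a with 0%nat => 1 | S _ => INR a + 1 end) with (INR (S a)).
      change (match b with 0%nat => 1 | S _ => INR b + 1 end) with (INR (S b)).
      rewrite !S_INR. cbn [pow]. change (1 + - x) with (1 - x). ring.
    + intros x _. unfold G'.
      apply (@ex_derive_continuous R_AbsRing R_NormedModule). auto_derive. auto. }
  pose proof (is_RInt_scal _ 0 1 (INR b + 1) _ (IH (S a))) as H2.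
  pose proof (is_RInt_plus _ _ 0 1 _ _ H1 H2) as H3.
  pose proof (is_RInt_scal _ 0 1 (/(INR a + 1)) _ H3) as H4.
  match type of H4 with is_RInt _ _ _ ?v => replace (INR (fact a) * INR (fact (S b)) / INR (fact (a + S b + 1))) with v end.
  - eapply is_RInt_ext; [| exact H4]. intros y _. unfold G'. unfold scal, plus; simpl. unfold mult; simpl.
    field. lra.
  - replace (a + S b + 1)%nat with (S (a + b + 1))%nat by lia.
    replace (S a + b + 1)%nat with (S (a + b + 1))%nat by lia.
    rewrite !fact_S_INR, !plus_INR.
    unfold G. unfold scal, plus, minus, opp; simpl. unfold mult, plus; simpl.
    pose proof (INR_fact_pos a). pose proof (INR_fact_pos b). pose proof (INR_fact_pos (a+b+1)).
    field. repeat split; lra.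
Qed.
Lemma u_bound t : 0 <= t <= 1 -> 0 <= t*(1-t)^3 <= 1.
Proof.
  intros Ht. replace ((1-t)^3) with ((1-t)*((1-t)*(1-t))) by ring.
  assert (0 <= (1-t)*(1-t) <= 1) by nra.
  assert (0 <= (1-t)*((1-t)*(1-t)) <= 1) by nra. nra.
Qed.

Lemma q_bound m t : 2 <= Rabs m -> 0 <= t <= 1 -> Rabs (t*(1-t)^3/m) <= /2.
Proof.
  intros Hm Ht. pose proof (u_bound t Ht).
  assert (m <> 0) by (intro; subst; rewrite Rabs_R0 in Hm; lra).
  unfold Rdiv. rewrite Rabs_mult, Rabs_Rinv by auto.
  rewrite (Rabs_right (t*(1-t)^3)) by lra.
  apply Rmult_le_reg_r with (Rabs m). lra.
  rewrite Rmult_assoc, Rinv_l by lra. nra.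
Qed.

Lemma series_int (h : R -> R) (m L M : R) (s : nat -> R) :
  2 <= Rabs m ->
  (forall t, 0 <= t <= 1 -> Rabs (h t) <= M) ->
  (forall n, is_RInt (fun t => (t*(1-t)^3/m)^n * h t) 0 1 (s n)) ->
  is_RInt (fun t => h t / (1 - t*(1-t)^3/m)) 0 1 L ->
  is_series s L.
Proof.
  intros Hm HM Hs HL.
  set (q := fun t => t*(1-t)^3/m).
  assert (Hq : forall t, 0 <= t <= 1 -> Rabs (q t) <= /2) by (intros; apply q_bound; auto).
  assert (Hq1 : forall t, 0 <= t <= 1 -> 1 - q t > 0).
  { intros t Ht. specialize (Hq t Ht). apply Rabs_le_between in Hq. lra. }
  assert (Hs' : forall n, is_RInt (fun t => (q t)^n * h t) 0 1 (s n)) by exact Hs.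
  assert (HL' : is_RInt (fun t => h t / (1 - q t)) 0 1 L) by exact HL.
  clearbody q. clear Hs HL. rename Hs' into Hs. rename HL' into HL.
  assert (Hopen : forall t, Rmin 0 1 < t < Rmax 0 1 -> 0 <= t <= 1).
  { intros t. rewrite Rmin_left, Rmax_right by lra. lra. }
  assert (HP : forall N, is_RInt (fun t => h t / (1 - q t) - (q t)^(S N) * h t / (1 - q t)) 0 1 (sum_n s N)).
  { induction N as [|N IH].
    - rewrite sum_O. eapply is_RInt_ext; [| exact (Hs 0%nat)].
      intros t Ht. specialize (Hq1 t (Hopen t Ht)). cbv beta. match goal with |- ?a = ?b => change (@eq R a b) end. field; lra.
    - rewrite sum_Sn. pose proof (is_RInt_plus _ _ 0 1 _ _ IH (Hs (S N))) as H.
      eapply is_RInt_ext; [| exact H].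
      intros t Ht. specialize (Hq1 t (Hopen t Ht)). unfold plus; simpl. cbv beta.
      match goal with |- ?a = ?b => change (@eq R a b) end. field; lra. }
  assert (HE : forall N, Rabs (sum_n s N - L) <= 2 * M * (/2)^(S N)).
  { intros N. pose proof (is_RInt_minus _ _ 0 1 _ _ HL (HP N)) as H.
    apply (is_RInt_ext _ (fun t => (q t)^(S N) * h t / (1 - q t))) in H.
    2:{ intros t Ht. specialize (Hq1 t (Hopen t Ht)). unfold minus, plus, opp; simpl. cbv beta. match goal with |- ?a = ?b => change (@eq R a b) end; field; lra. }
    apply norm_RInt_le_const with (M := 2 * M * (/2)^(S N)) in H.
    - unfold minus, plus, opp in H; simpl in H. unfold norm in H; simpl in H. unfold abs in H; simpl in H.
      rewrite Rabs_minus_sym. unfold Rminus. change ((/2)^S N) with (/2 * (/2)^N). lra.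
    - lra.
    - intros t Ht. specialize (Hq1 t Ht). specialize (Hq t Ht). specialize (HM t Ht).
      unfold norm; simpl. unfold abs; simpl.
      unfold Rdiv. rewrite !Rabs_mult, Rabs_Rinv by lra. rewrite <- RPow_abs.
      rewrite (Rabs_right (1 - q t)) by lra.
      assert (Hqn : Rabs (q t) ^ S N <= (/2)^(S N)) by (apply pow_incr; split; [apply Rabs_pos| lra]).
      assert (0 <= Rabs (q t) ^ S N) by (apply pow_le, Rabs_pos).
      assert (0 <= Rabs (h t)) by apply Rabs_pos.
      assert (Hi : / (1 - q t) <= 2).
      { apply Rmult_le_reg_r with (1 - q t). lra. rewrite Rinv_l by lra.
        apply Rabs_le_between in Hq. lra. }
      assert (0 <= / (1 - q t)) by (left; apply Rinv_0_lt_compat; lra).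
      change (Rabs (q t) * Rabs (q t) ^ N) with (Rabs (q t) ^ S N). change (/ 2 * (/ 2) ^ N) with ((/2)^S N). revert Hqn H0 H1 Hi H2 HM. generalize (Rabs (q t) ^ S N) (Rabs (h t)) (/ (1 - q t)) ((/2)^(S N)).
      intros A B C P HA HA0 HB0 HC HC0 HB.
      assert (A * B <= P * M) by (apply Rmult_le_compat; auto).
      assert (A * B * C <= P * M * 2) by (apply Rmult_le_compat; auto; apply Rmult_le_pos; auto).
      lra. }
  assert (Hlim : is_lim_seq (sum_n s) L).
  { apply is_lim_seq_le_le with (u := fun n => L - 2 * M * (/2)^(S n)) (w := fun n => L + 2 * M * (/2)^(S n)).
    - intros n. specialize (HE n). apply Rabs_le_between in HE. lra.
    - replace (Finite L) with (Finite (L - 2 * M * 0)) by (f_equal; ring).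
      apply is_lim_seq_minus'. apply is_lim_seq_const.
      apply (is_lim_seq_scal_l _ (2*M) 0). apply (is_lim_seq_incr_1 (fun n => (/2)^n)).
      apply is_lim_seq_geom. rewrite Rabs_right; lra.
    - replace (Finite L) with (Finite (L + 2 * M * 0)) by (f_equal; ring).
      apply is_lim_seq_plus'. apply is_lim_seq_const.
      apply (is_lim_seq_scal_l _ (2*M) 0). apply (is_lim_seq_incr_1 (fun n => (/2)^n)).
      apply is_lim_seq_geom. rewrite Rabs_right; lra. }
  exact Hlim.
Qed.
Lemma pow_le1 x n : 0 <= x <= 1 -> x ^ n <= 1.
Proof. intros H. rewrite <- (pow1 n). apply pow_incr. lra. Qed.

Definition bern (b0 b1 b2 b3 t : R) : R :=
  b0 * (1-t)^3 + b1 * (t * (1-t)^2) + b2 * (t^2 * (1-t)) + b3 * t^3.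

Lemma bern_bound b0 b1 b2 b3 t : 0 <= t <= 1 ->
  Rabs (bern b0 b1 b2 b3 t) <= Rabs b0 + Rabs b1 + Rabs b2 + Rabs b3.
Proof.
  intros Ht. unfold bern.
  assert (H0 : 0 <= (1-t)^3 <= 1) by (split; [apply pow_le; lra| apply pow_le1; lra]).
  assert (H1 : 0 <= t * (1-t)^2 <= 1).
  { assert (0 <= (1-t)^2 <= 1) by (split; [apply pow_le; lra| apply pow_le1; lra]). nra. }
  assert (H2 : 0 <= t^2 * (1-t) <= 1).
  { assert (0 <= t^2 <= 1) by (split; [apply pow_le; lra| apply pow_le1; lra]). nra. }
  assert (H3 : 0 <= t^3 <= 1) by (split; [apply pow_le; lra| apply pow_le1; lra]).
  assert (forall b x, 0 <= x <= 1 -> Rabs (b * x) <= Rabs b).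
  { intros b x Hx. rewrite Rabs_mult, (Rabs_right x) by lra.
    pose proof (Rabs_pos b). nra. }
  eapply Rle_trans. apply Rabs_triang.
  eapply Rle_trans. apply Rplus_le_compat_r. apply Rabs_triang.
  eapply Rle_trans. apply Rplus_le_compat_r. apply Rplus_le_compat_r. apply Rabs_triang.
  pose proof (H b0 _ H0). pose proof (H b1 _ H1). pose proof (H b2 _ H2). pose proof (H b3 _ H3).
  lra.
Qed.

Lemma log_int_pos A r : 1 < r ->
  is_RInt (fun t => A / (t - r)) 0 1 (A * (ln (r - 1) - ln r)).
Proof.
  intros Hr.
  replace (A * (ln (r - 1) - ln r)) with (minus ((fun t => A * ln (r - t)) 1) ((fun t => A * ln (r - t)) 0)).
  - apply (is_RInt_derive (V:=R_CompleteNormedModule) (fun t => A * ln (r - t))).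
    + intros x Hx. rewrite Rmin_left, Rmax_right in Hx by lra. auto_derive. lra.
      field. lra.
    + intros x Hx. rewrite Rmin_left, Rmax_right in Hx by lra.
      apply (@ex_derive_continuous R_AbsRing R_NormedModule). auto_derive. lra.
  - unfold minus, plus, opp; simpl. rewrite Rminus_0_r. ring.
Qed.

Lemma log_int_neg A r : r < 0 ->
  is_RInt (fun t => A / (t - r)) 0 1 (A * (ln (1 - r) - ln (- r))).
Proof.
  intros Hr.
  replace (A * (ln (1 - r) - ln (- r))) with (minus ((fun t => A * ln (t - r)) 1) ((fun t => A * ln (t - r)) 0)).
  - apply (is_RInt_derive (V:=R_CompleteNormedModule) (fun t => A * ln (t - r))).
    + intros x Hx. rewrite Rmin_left, Rmax_right in Hx by lra. auto_derive. lra.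
      field. lra.
    + intros x Hx. rewrite Rmin_left, Rmax_right in Hx by lra.
      apply (@ex_derive_continuous R_AbsRing R_NormedModule). auto_derive. lra.
  - unfold minus, plus, opp; simpl. replace (0 - r) with (- r) by ring. ring.
Qed.

Lemma main_int A m r b0 b1 b2 b3 L : m < 0 -> (r < 0 \/ 1 < r) ->
  (forall t, m - t * (1-t)^3 = (t - r) * bern b0 b1 b2 b3 t) ->
  is_RInt (fun t => A / (t - r)) 0 1 L ->
  is_RInt (fun t => A * bern b0 b1 b2 b3 t / m / (1 - t*(1-t)^3/m)) 0 1 L.
Proof.
  intros Hm Hr Hf HL. eapply is_RInt_ext; [|exact HL].
  intros t Ht. rewrite Rmin_left, Rmax_right in Ht by lra.
  cbv beta. match goal with |- ?a = ?b => change (@eq R a b) end.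
  pose proof (Hf t) as E.
  assert (0 <= t * (1-t)^3) by (apply Rmult_le_pos; [lra| apply pow_le; lra]).
  assert (Hne : (t - r) * bern b0 b1 b2 b3 t <> 0) by (rewrite <- E; lra).
  assert (t - r <> 0) by (intro Z; apply Hne; rewrite Z; ring).
  assert (bern b0 b1 b2 b3 t <> 0) by (intro Z; apply Hne; rewrite Z; ring).
  replace (1 - t*(1-t)^3/m) with ((m - t*(1-t)^3)/m) by (field; lra).
  rewrite E. field. repeat split; lra.
Qed.

Lemma beta' a b c : (a + b + 1 = c)%nat ->
  is_RInt (fun t => t^a * (1-t)^b) 0 1 (INR (fact a) * INR (fact b) / INR (fact c)).
Proof. intros <-. apply beta. Qed.

Definition Iv (a b n : nat) : R := INR (fact a) * INR (fact b) / INR (fact (4*n+4)).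

Lemma term_int m A b0 b1 b2 b3 n : m <> 0 ->
  is_RInt (fun t => (t*(1-t)^3/m)^n * (A * bern b0 b1 b2 b3 t / m)) 0 1
    (A / m^(S n) * (b0 * Iv n (3*n+3) n + b1 * Iv (n+1) (3*n+2) n
                    + b2 * Iv (n+2) (3*n+1) n + b3 * Iv (n+3) (3*n) n)).
Proof.
  intros Hm. unfold Iv.
  pose proof (is_RInt_scal _ 0 1 b0 _ (beta' n (3*n+3) (4*n+4) ltac:(lia))) as J0.
  pose proof (is_RInt_scal _ 0 1 b1 _ (beta' (n+1) (3*n+2) (4*n+4) ltac:(lia))) as J1.
  pose proof (is_RInt_scal _ 0 1 b2 _ (beta' (n+2) (3*n+1) (4*n+4) ltac:(lia))) as J2.
  pose proof (is_RInt_scal _ 0 1 b3 _ (beta' (n+3) (3*n) (4*n+4) ltac:(lia))) as J3.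
  pose proof (is_RInt_plus _ _ 0 1 _ _ J0 J1) as J01.
  pose proof (is_RInt_plus _ _ 0 1 _ _ J01 J2) as J012.
  pose proof (is_RInt_plus _ _ 0 1 _ _ J012 J3) as J.
  pose proof (is_RInt_scal _ 0 1 (A / m^(S n)) _ J) as K.
  eapply is_RInt_ext; [| exact K].
  intros t _. cbv beta. rewrite !pow_add, !pow_mult.
  unfold scal, plus; simpl. unfold mult; simpl.
  match goal with |- ?a = ?b => change (@eq R a b) end.
  unfold Rdiv. rewrite !Rpow_mult_distr, pow_inv. unfold bern.
  assert (m ^ n <> 0) by (apply pow_nonzero; auto).
  field. auto.
Qed.

Lemma INR3n n : INR (3 * n) = 3 * INR n.
Proof. rewrite mult_INR. simpl. ring. Qed.

Lemma summand_eq a b c m n : m <> 0 ->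
  summand a b c m (S n) = (a*(INR n+1)^2 + b*(INR n+1) + c) * (3*INR n+3)
     * INR (fact n) * INR (fact (3*n)) / (m^(S n) * INR (fact (4*n+4))).
Proof.
  intros Hm. unfold summand, Binomial.C.
  replace (4 * S n - S n)%nat with (S (S (S (3*n)))) by lia.
  replace (4 * S n)%nat with (4*n+4)%nat by lia.
  rewrite !fact_S_INR, !S_INR, INR3n.
  pose proof (pos_INR n). pose proof (INR_fact_pos n). pose proof (INR_fact_pos (3*n)).
  pose proof (INR_fact_pos (4*n+4)).
  assert (m ^ S n <> 0) by (apply pow_nonzero; auto).
  field. repeat split; lra.
Qed.

Lemma value_eq a b c m A b0 b1 b2 b3 n : m <> 0 ->
  (forall x, A*(b0*((3*x+3)*(3*x+2)*(3*x+1)) + b1*((x+1)*(3*x+2)*(3*x+1))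
       + b2*((x+1)*(x+2)*(3*x+1)) + b3*((x+1)*(x+2)*(x+3)))
     = (a*(x+1)^2+b*(x+1)+c)*(3*x+3)) ->
  A / m^(S n) * (b0 * Iv n (3*n+3) n + b1 * Iv (n+1) (3*n+2) n
                    + b2 * Iv (n+2) (3*n+1) n + b3 * Iv (n+3) (3*n) n)
  = summand a b c m (S n).
Proof.
  intros Hm H. rewrite summand_eq by auto. rewrite <- H. unfold Iv.
  replace (3*n+3)%nat with (S (S (S (3*n)))) by lia.
  replace (3*n+2)%nat with (S (S (3*n))) by lia.
  replace (3*n+1)%nat with (S (3*n)) by lia.
  replace (n+3)%nat with (S (S (S n))) by lia.
  replace (n+2)%nat with (S (S n)) by lia.
  replace (n+1)%nat with (S n) by lia.
  rewrite !fact_S_INR, !S_INR, INR3n.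
  pose proof (pos_INR n). pose proof (INR_fact_pos n). pose proof (INR_fact_pos (3*n)).
  pose proof (INR_fact_pos (4*n+4)).
  assert (m ^ S n <> 0) by (apply pow_nonzero; auto).
  field. repeat split; lra.
Qed.

Lemma case_gen a b c m A r b0 b1 b2 b3 L :
  m <= -2 -> (r < 0 \/ 1 < r) ->
  (forall t, m - t * (1-t)^3 = (t - r) * bern b0 b1 b2 b3 t) ->
  (forall x, A*(b0*((3*x+3)*(3*x+2)*(3*x+1)) + b1*((x+1)*(3*x+2)*(3*x+1))
       + b2*((x+1)*(x+2)*(3*x+1)) + b3*((x+1)*(x+2)*(x+3)))
     = (a*(x+1)^2+b*(x+1)+c)*(3*x+3)) ->
  is_RInt (fun t => A / (t - r)) 0 1 L ->
  is_series (fun n => summand a b c m (S n)) L.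
Proof.
  intros Hm Hr Hf Hp HL.
  assert (Hm0 : m <> 0) by lra.
  apply (series_int (fun t => A * bern b0 b1 b2 b3 t / m) m L
           (Rabs A * (Rabs b0 + Rabs b1 + Rabs b2 + Rabs b3) / Rabs m)).
  - rewrite Rabs_left by lra. lra.
  - intros t Ht. unfold Rdiv. rewrite !Rabs_mult, Rabs_Rinv by auto.
    pose proof (bern_bound b0 b1 b2 b3 t Ht). pose proof (Rabs_pos A).
    assert (0 < / Rabs m) by (apply Rinv_0_lt_compat; apply Rabs_pos_lt; auto).
    apply Rmult_le_compat_r. lra. apply Rmult_le_compat_l; auto.
  - intros n. rewrite <- (value_eq a b c m A b0 b1 b2 b3 n Hm0 Hp). apply term_int; auto.
  - apply (main_int A m r b0 b1 b2 b3 L); auto. lra.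
Qed.

Theorem theorem1p2 :
  is_series (fun n => summand 77 (-53) 10 (-2) (S n)) (- 3 * ln 2) /\
  is_series (fun n => summand 415 (-343) 62 (-8) (S n)) (- 3 * ln 2) /\
  is_series (fun n => summand 187 (-131) 22 (-24) (S n)) (ln (2 / 3)) /\
  is_series (fun n => summand 1261 (-989) 170 (-192) (S n)) (ln (3 / 4)).
Proof.
  repeat split.
  - apply (case_gen _ _ _ _ 3 2 1 4 4 2); try lra.
    + intros t. unfold bern. ring.
    + intros x. ring.
    + replace (- 3 * ln 2) with (3 * (ln (2 - 1) - ln 2)).
      * apply log_int_pos. lra.
      * replace (2 - 1) with 1 by lra. rewrite ln_1. ring.
  - apply (case_gen _ _ _ _ (-3) (-1) (-8) (-17) (-14) (-4)); try lra.
    + intros t. unfold bern. ring.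
    + intros x. ring.
    + replace (- 3 * ln 2) with ((-3) * (ln (1 - -1) - ln (- -1))).
      * apply log_int_neg. lra.
      * replace (1 - -1) with 2 by lra. replace (- -1) with 1 by lra. rewrite ln_1. ring.
  - apply (case_gen _ _ _ _ 1 3 8 27 30 12); try lra.
    + intros t. unfold bern. ring.
    + intros x. ring.
    + replace (ln (2 / 3)) with (1 * (ln (3 - 1) - ln 3)).
      * apply log_int_pos. lra.
      * replace (3 - 1) with 2 by lra. rewrite ln_div by lra. ring.
  - apply (case_gen _ _ _ _ (-1) (-3) (-64) (-171) (-156) (-48)); try lra.
    + intros t. unfold bern. ring.
    + intros x. ring.
    + replace (ln (3 / 4)) with ((-1) * (ln (1 - -3) - ln (- -3))).
      * apply log_int_neg. lra.
      * replace (1 - -3) with 4 by lra. replace (- -3) with 3 by lra. rewrite ln_div by lra. ring.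
Qed.
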